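(* Let $(X,d)$ be a compact metric space and $f_{0,\infty}=\{f_n\}_{n=0}^\infty$ an equi-continuous sequence of continuous self-maps of $X$. Then \[h^{*}(f_{0,\infty}^{n})=h^{*}(f_{0,\infty}),\quad n\geq1.\]
   Context: $f_{0,\infty}$ is equi-continuous if for every $\epsilon>0$ there is $\delta>0$ with $d(x,y)<\delta\Rightarrow d(f_n x,f_n y)<\epsilon$ for all $n$. $f_i^n=f_{i+n-1}\circ\cdots\circ f_i$, $f_i^0=\mathrm{id}$. The $n$-th compositions system is $f_{0,\infty}^n=\{f_{kn}^n\}_{k=0}^\infty$, i.e. the maps $f_{kn+n-1}\circ\cdots\circ f_{kn}$, $k\ge0$. $\mathcal S$ is the set of strictly increasing sequences $A=\{a_i\}_{i\ge1}$ of nonnegative integers. For a sequence $g_{0,\infty}$ of continuous self-maps, $h_A(g_{0,\infty})=\sup_{\mathscr A}\limsup_{m\to\infty}\frac1m\log\mathcal N(\bigvee_{i=1}^m (g_0^{a_i})^{-1}\mathscr A)$ over finite open covers $\mathscr A$ ($\bigvee$ = common refinement, $\mathcal N$ = minimal cardinality of a subcover), and $h^*(g_{0,\infty})=\sup_{A\in\mathcal S}h_A(g_{0,\infty})$. *)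

(* Defs.v *)
From HB Require Import structures.
From mathcomp Require Import all_boot all_order all_algebra.
From mathcomp Require Import all_classical all_reals all_analysis.
Set Implicit Arguments. Unset Strict Implicit. Unset Printing Implicit Defensive.
Import Order.TTheory GRing.Theory Num.Theory.
Local Open Scope classical_set_scope.
Local Open Scope ring_scope.

Section Defs.
Context {R : realType} {X : metricType R}.

Fixpoint comp_seq (f : nat -> X -> X) (i n : nat) : X -> X :=
  match n with
  | 0 => id
  | n'.+1 => f (i + n')%N \o comp_seq f i n'
  end.

(* the n-th compositions system f_{0,oo}^n = {f_{kn}^n}_{k>=0} *)
Definition nth_comp_system (f : nat -> X -> X) (n : nat) : nat -> X -> X :=
  fun k => comp_seq f (k * n) n.

Definition equicontinuous_seq (f : nat -> X -> X) : Prop :=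
  forall e : R, 0 < e -> exists2 d : R, 0 < d &
    forall x y : X, mdist x y < d -> forall n, mdist (f n x) (f n y) < e.

Definition finite_open_cover (k : nat) (U : 'I_k -> set X) : Prop :=
  (forall i, open (U i)) /\ (forall x : X, exists i, U i x).

(* the family F (indexed by J) has a subcover of cardinality (at most) m *)
Definition has_subcover_of_size (J : Type) (F : J -> set X) (m : nat) : Prop :=
  exists idx : 'I_m -> J, forall x : X, exists i, F (idx i) x.

Definition Ncov (J : Type) (F : J -> set X) : R :=
  inf [set (m%:R : R) | m in has_subcover_of_size F].

(* \bigvee_{i=1}^m (g_0^{a_i})^{-1} U, indexed by choices 'I_m -> 'I_k *)
Definition join_preimages (g : nat -> X -> X) (a : nat -> nat) (m k : nat)
    (U : 'I_k -> set X) : ('I_m -> 'I_k) -> set X :=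
  fun phi => [set x | forall i : 'I_m, U (phi i) (comp_seq g 0 (a i) x)].

Definition h_A_cover (g : nat -> X -> X) (a : nat -> nat) (k : nat)
    (U : 'I_k -> set X) : \bar R :=
  limn_esup (fun m : nat =>
    ((ln (Ncov (@join_preimages g a m k U))) / (m%:R))%:E).

Definition h_A (g : nat -> X -> X) (a : nat -> nat) : \bar R :=
  ereal_sup [set h_A_cover g a (projT2 U) | U in
     [set U : {k : nat & 'I_k -> set X} | finite_open_cover (projT2 U)]
     ] .

Definition strictly_increasing (a : nat -> nat) : Prop :=
  forall i j, (i < j)%N -> (a i < a j)%N.

Definition seq_entropy (g : nat -> X -> X) : \bar R :=
  ereal_sup [set h_A g a | a in strictly_increasing].

End Defs.

(* Main.v *)
Require Import Defs.
From HB Require Import structures.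
From mathcomp Require Import all_boot all_order all_algebra.
From mathcomp Require Import all_classical all_reals all_analysis.
Set Implicit Arguments. Unset Strict Implicit. Unset Printing Implicit Defensive.
Import Order.TTheory GRing.Theory Num.Theory.
Local Open Scope classical_set_scope.
Local Open Scope ring_scope.

Lemma seq_distinct (q : nat -> nat) :
  (forall i j, (i <= j)%N -> (q i <= q j)%N) ->
  (forall v, exists i, (v < q i)%N) ->
  exists b : nat -> nat, (forall i j, (i < j)%N -> (b i < b j)%N) /\
    forall i, exists j, (j <= i)%N /\ b j = q i.
Proof.
move=> qmono unb.
pose nx v := ex_minn (unb v).
pose b := fix b j := if j is j'.+1 then q (nx (b j')) else q 0%N.
have bS j : (b j < b j.+1)%N.
  rewrite /=; rewrite /nx; case: ex_minnP => m Hm _; exact: Hm.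
exists b; split.
  move=> i j; apply: (@homo_ltn _ b (fun x y => (x < y)%N)) => //.
  move=> y x z; exact: ltn_trans.
elim=> [|i [j [ji bj]]]; first by exists 0%N.
have [E|NE] := eqVneq (q i.+1) (q i).
  by exists j; split; [exact: leqW|rewrite E].
exists j.+1; split => //.
have lt : (q i < q i.+1)%N by rewrite ltn_neqAle eq_sym NE qmono.
rewrite /= -/b bj /nx; case: ex_minnP => m Hm Hmin.
have mle : (m <= i.+1)%N by exact: Hmin.
have mgt : (i < m)%N.
  rewrite ltnNge; apply/negP => mi; have := qmono _ _ mi.
  by rewrite leqNgt Hm.
have -> : m = i.+1 by apply/eqP; rewrite eqn_leq mle mgt.
by [].
Qed.


Section P.
Context {R : realType} {X : metricType R} (x0 : X).
Definition Xp : Type := X.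
HB.instance Definition _ := Topological.copy Xp X.
HB.instance Definition _ := isPointed.Build Xp x0.
Lemma cover_compact_Xp : compact [set: X] -> cover_compact [set: Xp].
Proof. move=> h. rewrite -compact_cover. exact: h. Qed.
End P.

Lemma I0_false (j : 'I_0) : False. Proof. by case: j. Qed.

Section S.
Context {R : realType} {X : metricType R}.

Lemma ball_cover (e : R) : compact [set: X] -> 0 < e ->
  exists k (c : 'I_k -> X), forall x, exists j, (ball (c j) e)° x.
Proof.
move=> cX e0.
have [[x0 _]|nX] := pselect (exists x : X, True); last first.
  exists 0%N; exists (fun j : 'I_0 => False_rect X (I0_false j)) => x.
  by exfalso; apply: nX; exists x.
have := cover_compact_Xp x0 cX => /(_ X setT (fun c => (ball c e)°)).
case.
- by move=> i _; exact: open_interior.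
- move=> x _; exists x => //; exact: nbhsx_ballx.
move=> D _ HD.
pose s : seq X := finmap.enum_fset D.
exists (size s), (fun j => tnth (in_tuple s) j) => x.
have [c /= cD Hc] := HD x I.
exists (Ordinal (elimT (idP) (eqbRL (index_mem c s) cD))).
by rewrite (tnth_nth c) /= nth_index.
Qed.

Implicit Type f : nat -> X -> X.

Lemma equi_comp f : equicontinuous_seq f -> forall r e, 0 < e ->
  exists2 d, 0 < d & forall x y : X, mdist x y < d ->
    forall p, mdist (comp_seq f p r x) (comp_seq f p r y) < e.
Proof.
move=> ef; elim=> [|r IH] e e0.
  by exists e => // x y.
have [d1 d10 H1] := ef e e0.
have [d2 d20 H2] := IH d1 d10.
by exists d2 => // x y xy p /=; apply: H1; apply: H2.
Qed.

Lemma equi_comp_lt f : equicontinuous_seq f -> forall N e, 0 < e ->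
  exists2 d, 0 < d & forall x y : X, mdist x y < d ->
    forall p r, (r < N)%N -> mdist (comp_seq f p r x) (comp_seq f p r y) < e.
Proof.
move=> ef; elim=> [|N IH] e e0.
  by exists 1 => // x y _ p r.
have [d1 d10 H1] := IH e e0.
have [d2 d20 H2] := equi_comp ef N e0.
exists (Num.min d1 d2); first by rewrite lt_min d10 d20.
move=> x y; rewrite lt_min => /andP[xy1 xy2] p r; rewrite ltnS leq_eqVlt.
by case/orP => [/eqP->|rN]; [exact: H2|exact: H1].
Qed.

Lemma lebesgue_number k (U : 'I_k -> set X) :
  compact [set: X] -> finite_open_cover U ->
  exists2 d : R, 0 < d & forall y, exists i, forall z, mdist y z < d -> U i z.
Proof.
move=> cX [Uo Uc].
have H : forall x, [set: X] x -> \forall x' \near x & d \near (0:R)^'+,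
    (fun d y => exists i, forall z, mdist y z < d -> U i z) d x'.
  move=> x _; have [i Ui] := Uc x.
  have : nbhs x (U i) by have := Uo i; rewrite openE => /(_ x Ui).
  move=> /nbhs_ballP [r /= r0]; rewrite ballEmdist => Hr.
  near=> x' d.
  exists i => z xz; apply: Hr => /=.
  rewrite (le_lt_trans (metric_triangle _ x' _))//.
  rewrite (splitr r) ltrD//.
    near: x'; have := @near_ball _ _ x (r / 2) (divr_gt0 r0 (ltr0Sn _ 1)).
    by rewrite ballEmdist.
  apply: (lt_le_trans xz) => /=; near: d; apply: nbhs_right_le.
  exact: divr_gt0.
move: (proj1 (compact_near_coveringP _) cX) => /(_ R (0:R)^'+ _ _ H) H2.
have [d [d0 Hd]] := filter_ex (filterI (nbhs_right_gt (0:R)) H2).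
by exists d => // y; apply: Hd.
Unshelve. all: by end_near.
Qed.

Lemma comp_seqD f i s t x :
  comp_seq f i (s + t) x = comp_seq f (i + s) t (comp_seq f i s x).
Proof.
elim: t => [|t IH]; first by rewrite addn0.
by rewrite addnS /= IH addnA.
Qed.

Lemma comp_nth f n q x :
  comp_seq (nth_comp_system f n) 0 q x = comp_seq f 0 (q * n) x.
Proof.
elim: q => [|q IH] //=.
by rewrite IH /nth_comp_system add0n mulSn addnC comp_seqD add0n.
Qed.


Lemma refine_cover f n k (U : 'I_k -> set X) :
  compact [set: X] -> equicontinuous_seq f -> finite_open_cover U ->
  exists k' (V : 'I_k' -> set X), finite_open_cover V /\
    forall j p r, (r < n)%N -> exists i, forall x, V j x -> U i (comp_seq f p r x).
Proof.
move=> cX ef UU.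
have [d d0 Hd] := lebesgue_number cX UU.
have [e e0 He] := equi_comp_lt ef n d0.
have [k' [c Hc]] := ball_cover cX e0.
exists k', (fun j => (ball (c j) e)°); split.
  split; [move=> j; exact: open_interior | exact: Hc].
move=> j p r rn.
have [i Hi] := Hd (comp_seq f p r (c j)).
exists i => x /interior_subset; rewrite ballEmdist /= => cx.
by apply: Hi; apply: He.
Qed.


Lemma Ncov_le J J' (F : J -> set X) (G : J' -> set X) :
  (forall j, exists j', F j `<=` G j') -> (exists M, has_subcover_of_size F M) ->
  ln (Ncov G) <= ln (Ncov F).
Proof.
move=> FG [M HM].
have sub m : has_subcover_of_size F m -> has_subcover_of_size G m.
  move=> [idx Hidx]; have [g Hg] := fin_all_exists (fun t => FG (idx t)).
  exists g => x; have [t Ht] := Hidx x; exists t; exact: Hg.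
have lbG : has_lbound [set (m%:R : R) | m in has_subcover_of_size G].
  by exists 0 => _ [m _ <-].
have lbF : has_lbound [set (m%:R : R) | m in has_subcover_of_size F].
  by exists 0 => _ [m _ <-].
have le : Ncov G <= Ncov F.
  rewrite /Ncov; apply: lb_le_inf; first by exists M%:R; exists M.
  move=> _ [m Hm <-]; apply: (ge_inf lbG); exists m => //; exact: sub.
have [[x0 _]|nX] := pselect (exists x : X, True).
  have G1 : 1 <= Ncov G.
    apply: lb_le_inf; first by exists M%:R; exists M => //; exact: sub.
    move=> _ [m [idx Hidx] <-]; have [t _] := Hidx x0.
    by rewrite ler1n; exact: (leq_ltn_trans (leq0n t) (ltn_ord t)).
  by rewrite ler_ln ?posrE // (lt_le_trans ltr01) // (le_trans G1).
have z0 J0 (H : J0 -> set X) : Ncov H <= 0.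
  apply: ge_inf; first by exists 0 => _ [m _ <-].
  exists 0%N => //; exists (fun t : 'I_0 => False_rect J0 (I0_false t)).
  by move=> x; exfalso; apply: nX; exists x.
by rewrite !ln0.
Qed.

Lemma limn_esup_le (u v : nat -> \bar R) : (forall m, (u m <= v m)%E) ->
  (limn_esup u <= limn_esup v)%E.
Proof.
move=> uv; rewrite /limn_esup /limf_esup.
apply: le_ereal_inf_tmp => _ [V FV <-].
apply: ge_ereal_inf; exists (ereal_sup (u @` V)); first by exists V.
apply: ge_ereal_sup => _ [m Vm <-].
apply: le_trans (uv m) _; apply: ereal_sup_ubound; by exists m.
Qed.

Lemma hAc_le g1 a1 k1 (U1 : 'I_k1 -> set X) g2 a2 k2 (U2 : 'I_k2 -> set X) :
  (forall m, ln (Ncov (@join_preimages _ _ g1 a1 m k1 U1))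
              <= ln (Ncov (@join_preimages _ _ g2 a2 m k2 U2))) ->
  (h_A_cover g1 a1 U1 <= h_A_cover g2 a2 U2)%E.
Proof.
move=> H; apply: limn_esup_le => m; rewrite lee_fin.
by apply: ler_wpM2r; [rewrite invr_ge0 | exact: H].
Qed.


Lemma join_sub g b m k (V : 'I_k -> set X) : (forall x, exists j, V j x) ->
  exists M, has_subcover_of_size (@join_preimages _ _ g b m k V) M.
Proof.
move=> Vc; exists #|{ffun 'I_m -> 'I_k}|.
exists (fun t => fun i => (enum_val t : {ffun 'I_m -> 'I_k}) i) => x.
have [psi Hpsi] := fin_all_exists (fun i : 'I_m => Vc (comp_seq g 0 (b i) x)).
exists (enum_rank [ffun i => psi i]); rewrite enum_rankK /join_preimages /= => i.
by rewrite ffunE; exact: Hpsi.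
Qed.

Lemma hA_le f n : compact [set: X] -> equicontinuous_seq f -> (0 < n)%N ->
  forall a, strictly_increasing a ->
  (h_A f a <= seq_entropy (nth_comp_system f n))%E.
Proof.
move=> cX ef n0 a sa.
apply: ge_ereal_sup => _ [[k U] /= UU <-].
have [k' [V [VV HV]]] := refine_cover n cX ef UU.
pose q i := (a i %/ n)%N.
have a_ge i : (i <= a i)%N.
  by elim: i => // i IH; apply: leq_ltn_trans IH (sa i i.+1 (ltnSn i)).
have qmono i j : (i <= j)%N -> (q i <= q j)%N.
  rewrite leq_eqVlt => /orP[/eqP->//|ij]; apply: leq_div2r.
  exact: ltnW (sa _ _ ij).
have unb v : exists i, (v < q i)%N.
  exists (v.+1 * n)%N; rewrite /q; apply: leq_trans (leq_div2r n (a_ge _)).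
  by rewrite mulnK.
have [b [sb Hb]] := seq_distinct qmono unb.
apply: (@le_trans _ _ (h_A (nth_comp_system f n) b)); last first.
  by apply: ereal_sup_ubound; exists b.
apply: (@le_trans _ _ (h_A_cover (nth_comp_system f n) b V)); last first.
  by apply: ereal_sup_ubound; exists (existT _ k' V).
apply: hAc_le => m.
apply: Ncov_le; last by apply: join_sub; case: VV.
move=> psi.
have : forall i : 'I_m, exists u : 'I_k,
    @join_preimages _ _ (nth_comp_system f n) b m k' V psi
      `<=` [set x | U u (comp_seq f 0 (a i) x)].
  move=> i; have [j [ji bj]] := Hb i.
  have jm : (j < m)%N := leq_ltn_trans ji (ltn_ord i).
  have [u Hu] := HV (psi (Ordinal jm)) (b j * n)%N (a i %% n)%N (ltn_pmod _ n0).
  exists u => x /(_ (Ordinal jm)) /= Hx.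
  have := Hu _ Hx; rewrite comp_nth.
  have E := comp_seqD f 0 (b j * n) (a i %% n) x; rewrite add0n in E.
  by rewrite -E bj /q -divn_eq.
move=> /fin_all_exists [phi Hphi]; exists phi => x Hx i.
exact: Hphi i x Hx.
Qed.

Lemma hA_eq f n b :
  h_A (nth_comp_system f n) b = h_A f (fun j => b j * n)%N.
Proof.
have E m k (U : 'I_k -> set X) :
    @join_preimages _ _ (nth_comp_system f n) b m k U =
    @join_preimages _ _ f (fun j => b j * n)%N m k U.
  apply/funext => phi; apply/seteqP; split => x /= H i.
    by rewrite -comp_nth; exact: H.
  by rewrite comp_nth; exact: H.
have E2 k (U : 'I_k -> set X) :
    h_A_cover (nth_comp_system f n) b U = h_A_cover f (fun j => b j * n)%N U.
  by rewrite /h_A_cover; congr limn_esup; apply/funext => m; rewrite E.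
rewrite /h_A; congr ereal_sup; apply/seteqP; split => _ [U HU <-];
  by exists U => //; rewrite E2.
Qed.

End S.

Unset Implicit Arguments.

Theorem theorem4p4 (R : realType) (X : metricType R) (f : nat -> X -> X) :
  compact [set: X] ->
  (forall n, continuous (f n)) ->
  equicontinuous_seq f ->
  forall n : nat, (1 <= n)%N -> seq_entropy (nth_comp_system f n) = seq_entropy f.
Proof.
move=> cX _ ef n n1; apply/eqP; rewrite eq_le; apply/andP; split.
  apply: ge_ereal_sup => _ [b sb <-]; rewrite hA_eq.
  apply: ereal_sup_ubound; exists (fun j => b j * n)%N => //.
  by move=> i j ij; rewrite ltn_pmul2r //; exact: sb.
apply: ge_ereal_sup => _ [a sa <-]; exact: hA_le.
Qed.
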